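(* Let $N\ge 2$ units $i=1,\dots,N$ be observed at times $t=-L,\dots,0,1$ with binary treatment $A_i$ applied at $t=1$, and suppose potential outcomes satisfy $$Y_{it}(0)-Y_{i,t-1}(0)=\delta_t+\epsilon_{it,0},\qquad Y_{it}(1)-Y_{it}(0)=\mathbb{I}(t=1)(\psi+\epsilon_{it,1}),$$ so that the unit effect is $\psi_i=Y_{i1}(1)-Y_{i1}(0)=\psi+\epsilon_{i1,1}$. Assume $Y_{it}=\mathbb{I}(t=1)A_iY_{it}(1)+(1-\mathbb{I}(t=1)A_i)Y_{it}(0)$, that $1\le\sum_iA_i\le N-1$, and that $|\epsilon_{it,a}|\le\zeta$ for all $i,t$ and $a\in\{0,1\}$. Define $\hat\psi_i^{DiD}=Y_{i1}-\hat Y_{i1}(0)$ if $A_i=1$, where $\hat Y_{i1}(0)=Y_{i0}+[\sum_j(1-A_j)]^{-1}\sum_j(1-A_j)(Y_{j1}-Y_{j0})$, and $\hat\psi_i^{DiD}=\hat Y_{i1}(1)-Y_{i1}$ if $A_i=0$, where $\hat Y_{i1}(1)=Y_{i0}+[\sum_jA_j]^{-1}\sum_jA_j(Y_{j1}-Y_{j0})$. Let $\tilde\tau_i=\{\tau\ge 0:\psi_i\in[\hat\psi_i^{DiD}-\tau,\hat\psi_i^{DiD}+\tau]\}$. Then for every treated unit $i$ ($A_i=1$), every $q_0\ge 2\zeta$ lies in $\tilde\tau_i$; and for every untreated unit $i$ ($A_i=0$), every $q_1\ge 4\zeta$ lies in $\tilde\tau_i$. *)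

(* Defs.v *)
From HB Require Import structures.
From mathcomp Require Import all_boot all_order all_algebra.
Set Implicit Arguments. Unset Strict Implicit. Unset Printing Implicit Defensive.
Import Order.TTheory GRing.Theory Num.Theory.
Local Open Scope ring_scope.

Section DiD.
Variables (R : realFieldType) (N : nat).

Definition ind (b : bool) : R := (b : nat)%:R.

Definition obsY (A : 'I_N -> bool) (Y0 Y1 : 'I_N -> int -> R) (i : 'I_N) (t : int) : R :=
  ind ((t == 1) && A i) * Y1 i t + (1 - ind ((t == 1) && A i)) * Y0 i t.

Definition Yhat0 (A : 'I_N -> bool) (Y : 'I_N -> int -> R) (i : 'I_N) : R :=
  Y i 0 + (\sum_j (1 - ind (A j)))^-1 * \sum_j (1 - ind (A j)) * (Y j 1 - Y j 0).

Definition Yhat1 (A : 'I_N -> bool) (Y : 'I_N -> int -> R) (i : 'I_N) : R :=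
  Y i 0 + (\sum_j ind (A j))^-1 * \sum_j ind (A j) * (Y j 1 - Y j 0).

Definition psi_DiD (A : 'I_N -> bool) (Y : 'I_N -> int -> R) (i : 'I_N) : R :=
  if A i then Y i 1 - Yhat0 A Y i else Yhat1 A Y i - Y i 1.

Definition tilde_tau (A : 'I_N -> bool) (Y : 'I_N -> int -> R) (psi_i : R) (i : 'I_N) : pred R :=
  fun tau => (0 <= tau) &&
    (psi_i \in `[psi_DiD A Y i - tau, psi_DiD A Y i + tau]).

End DiD.

(* Main.v *)
Require Import Defs.
From HB Require Import structures.
From mathcomp Require Import all_boot all_order all_algebra.
From mathcomp Require Import ring lra zify.
Import Order.TTheory GRing.Theory Num.Theory.
Local Open Scope ring_scope.

Lemma mean_bnd (R : realFieldType) n (w x : 'I_n -> R) (z : R) :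
  (forall j, 0 <= w j) -> 0 < \sum_j w j -> (forall j, w j != 0 -> `|x j| <= z) ->
  `|(\sum_j w j)^-1 * \sum_j w j * x j| <= z.
Proof.
move=> w0 S0 hx; rewrite normrM ger0_norm; last by rewrite invr_ge0 ltW.
rewrite ler_pdivrMl // mulr_suml.
apply: le_trans (ler_norm_sum _ _ _) _; apply: ler_sum => j _.
rewrite normrM ger0_norm //; have [->|nz] := eqVneq (w j) 0; first by rewrite !mul0r.
by rewrite ler_pM2l ?hx // lt0r nz w0.
Qed.

Lemma obs1 (R : realFieldType) N A (Y0 Y1 : 'I_N -> int -> R) j :
  obsY A Y0 Y1 j 1 = if A j then Y1 j 1 else Y0 j 1.
Proof. by rewrite /obsY /ind eqxx /=; case: (A j) => /=; rewrite ?mulr1n ?mulr0n; ring. Qed.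

Lemma obs0 (R : realFieldType) N A (Y0 Y1 : 'I_N -> int -> R) j :
  obsY A Y0 Y1 j 0 = Y0 j 0.
Proof. by rewrite /obsY /ind /= mulr0n; ring. Qed.

Lemma sum_pos (R : realFieldType) n (w : 'I_n -> R) j0 :
  (forall j, 0 <= w j) -> 0 < w j0 -> 0 < \sum_j w j.
Proof.
move=> w0 p; rewrite (bigD1 j0) //=; apply: lt_le_trans p _.
by rewrite lerDl sumr_ge0.
Qed.

Arguments mean_bnd {R n w x z}.
Arguments sum_pos {R n w}.
Arguments obs1 {R N A Y0 Y1}.
Arguments obs0 {R N A Y0 Y1}.

Lemma ind_t (R : realFieldType) : ind R true = 1.
Proof. by rewrite /ind /=. Qed.
Lemma ind_f (R : realFieldType) : ind R false = 0.
Proof. by rewrite /ind /=. Qed.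

Lemma mean_eq (R : realFieldType) n (w e : 'I_n -> R) (d : R) :
  \sum_j w j != 0 ->
  (\sum_j w j)^-1 * \sum_j w j * (d + e j) = d + (\sum_j w j)^-1 * \sum_j w j * e j.
Proof.
move=> nz.
have -> : \sum_j w j * (d + e j) = (\sum_j w j) * d + \sum_j w j * e j.
  by rewrite mulr_suml -big_split; apply: eq_bigr => j _; rewrite mulrDr.
by rewrite mulrDr mulrA mulVf // mul1r.
Qed.
Arguments mean_eq {R n w e d}.

Theorem proposition5 (R : realFieldType) (N L : nat) (hN : (2 <= N)%N)
  (A : 'I_N -> bool)
  (hA : (1 <= \sum_(i < N) (A i : nat) <= N - 1)%N)
  (Y0 Y1 : 'I_N -> int -> R) (delta : int -> R) (psi zeta : R)
  (eps0 eps1 : 'I_N -> int -> R)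
  (h_untr : forall (i : 'I_N) (t : int), - (L%:Z) < t <= 1 ->
      Y0 i t - Y0 i (t - 1) = delta t + eps0 i t)
  (h_eff : forall (i : 'I_N) (t : int), - (L%:Z) <= t <= 1 ->
      Y1 i t - Y0 i t = ind R (t == 1) * (psi + eps1 i t))
  (h_bnd0 : forall (i : 'I_N) (t : int), - (L%:Z) <= t <= 1 -> `|eps0 i t| <= zeta)
  (h_bnd1 : forall (i : 'I_N) (t : int), - (L%:Z) <= t <= 1 -> `|eps1 i t| <= zeta) :
  let Y := obsY A Y0 Y1 in
  let psi_unit := fun i : 'I_N => Y1 i 1 - Y0 i 1 in
  (forall i : 'I_N, A i -> forall q0 : R, 2 * zeta <= q0 ->
      q0 \in tilde_tau A Y (psi_unit i) i) /\
  (forall i : 'I_N, ~~ A i -> forall q1 : R, 4 * zeta <= q1 ->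
      q1 \in tilde_tau A Y (psi_unit i) i).
Proof.
move=> Y psi_unit.
have HL : - (L%:Z) <= 0 by rewrite oppr_le0.
have Ht1 : - (L%:Z) <= 1%:Z <= 1%:Z by apply/andP; split => //; apply: le_trans HL _.
have Ht2 : - (L%:Z) < 1%:Z <= 1%:Z by apply/andP; split => //; apply: le_lt_trans HL _.
have e1 j : Y1 j 1 = Y0 j 1 + (psi + eps1 j 1).
  have := h_eff j 1 Ht1; rewrite eqxx ind_t mul1r => H; lra.
have d1 j : Y0 j 1 - Y0 j 0 = delta 1 + eps0 j 1.
  by have := h_untr j 1 Ht2; rewrite subrr.
have b0 j : `|eps0 j 1| <= zeta by exact: h_bnd0.
have b1 j : `|eps1 j 1| <= zeta by exact: h_bnd1.
have [jt hjt] : exists j, A j.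
  case: (pickP A) => [j Aj|nA]; first by exists j.
  exfalso; move: hA; rewrite big1 // => j _; by rewrite nA.
have [jc hjc] : exists j, ~~ A j.
  case: (pickP (fun j => ~~ A j)) => [j Aj|nA]; first by exists j.
  exfalso; move: hA; rewrite (eq_bigr (fun _ => 1%N)) ?sum1_card ?card_ord.
    by lia.
  by move=> j _; move: (nA j) => /=; case: (A j).
split.
- move=> i Ai q0 hq.
  set w := fun j => 1 - ind R (A j).
  have w0 j : 0 <= w j by rewrite /w; case: (A j); rewrite ?ind_t ?ind_f ?subrr ?subr0.
  have Sp : 0 < \sum_j w j.
    apply: (@sum_pos R N w jc) => //; by rewrite /w (negbTE hjc) ind_f subr0.
  have hm := mean_bnd w0 Sp (fun j _ => b0 j).
  move: hm; rewrite ler_norml => /andP [hm1 hm2].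
  move: (b0 i); rewrite ler_norml => /andP [hb1 hb2].
  have E := e1 i; have D := d1 i.
  have Hs : \sum_j (1 - ind R (A j)) * (Y j 1 - Y j 0) = \sum_j w j * (delta 1 + eps0 j 1).
    apply: eq_bigr => j _; rewrite /w /Y obs1 obs0; case: (A j); rewrite ?ind_t ?ind_f ?subrr ?mul0r //.
    by rewrite subr0 d1.
  rewrite unfold_in /tilde_tau /psi_DiD Ai /Yhat0 Hs /Y obs1 Ai obs0 in_itv /=.
  rewrite mean_eq; last by rewrite gt_eqF.
  rewrite /psi_unit.
  apply/andP; split; first lra.
  apply/andP; split; lra.
- move=> i Ai q1 hq.
  set w := fun j => ind R (A j).
  have w0 j : 0 <= w j by rewrite /w; case: (A j); rewrite ?ind_t ?ind_f.
  have Sp : 0 < \sum_j w j.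
    apply: (@sum_pos R N w jt) => //; by rewrite /w hjt ind_t.
  have hm' : forall j, w j != 0 -> `|eps0 j 1 + eps1 j 1| <= 2 * zeta.
    move=> j _; apply: le_trans (ler_normD _ _) _.
    have := b0 j; have := b1 j; lra.
  have hm2 := mean_bnd w0 Sp hm'.
  move: hm2; rewrite ler_norml => /andP [hm1 hm2].
  move: (b0 i); rewrite ler_norml => /andP [hb1 hb2].
  move: (b1 i); rewrite ler_norml => /andP [hc1 hc2].
  have E := e1 i; have D := d1 i.
  have Hs : \sum_j ind R (A j) * (Y j 1 - Y j 0) = \sum_j w j * ((delta 1 + psi) + (eps0 j 1 + eps1 j 1)).
    apply: eq_bigr => j _; rewrite /w /Y obs1 obs0; case: (A j); rewrite ?ind_t ?ind_f ?mul0r //.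
    rewrite e1; have := d1 j; move=> H; rewrite !mul1r; lra.
  rewrite unfold_in /tilde_tau /psi_DiD (negbTE Ai) /Yhat1 Hs /Y obs1 (negbTE Ai) obs0 in_itv /=.
  rewrite mean_eq; last by rewrite gt_eqF.
  rewrite /psi_unit.
  apply/andP; split; first lra.
  apply/andP; split; lra.
Qed.
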